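(* Let $X,Y$ be Banach spaces, let $S$ be a subset of $X$ (with the metric induced by the norm), let $K\ge0$, and let $f:S\to Y$ be a coarse quotient map with constant $K$ that is coarse Lipschitz. Then for all $0<t\le1$, $$\bar{\beta}_X\left(\frac{t}{48\,{\rm Lip}_\infty(f)\,c_\infty(f)}\right)\le\frac{3}{2}\bar{\rho}_Y(t).$$
   Context: All Banach spaces are real and infinite-dimensional; $B_X$, $S_X$ are the closed unit ball and unit sphere; $B_Z(z,r)$ is the closed ball of radius $r$ about $z$ in a metric space $Z$; for $A\subseteq Y$, $A^K:=\{y: \|y-a\|\le K\text{ for some }a\in A\}$. $\bar{\rho}_Y(t):=\sup_{y\in S_Y}\inf_{\dim(Y/Z)<\infty}\sup_{z\in S_Z}\|y+tz\|-1$ (infimum over finite-codimensional subspaces). The $(\beta)$-modulus is $\bar{\beta}_X(t)=1-\sup\{\inf_{n\ge1}\|x-x_n\|/2 : x,x_n\in B_X,\ {\rm sep}(\{x_n\})\ge t\}$, where ${\rm sep}(\{x_n\}_{n\ge1}):=\inf_{i\ne j}\|x_i-x_j\|$. For $f:S\to Y$: $\omega_f(t):=\sup\{\|f(x)-f(y)\|: x,y\in S,\ \|x-y\|\le t\}$; $f$ is coarsely continuous if $\omega_f(t)<\infty$ for all $t>0$; $f$ is co-coarsely continuous with constant $K$ if for every $d>K$ there is $\delta(d)>0$ with $f(B_S(x,\delta))^K\supseteq B_Y(f(x),d)$ for all $x\in S$; $f$ is a coarse quotient map with constant $K$ if both hold. ${\rm Lip}_s(f):=\sup\{\|f(x)-f(y)\|/\|x-y\|: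 \|x-y\|\ge s\}$, ${\rm Lip}_\infty(f):=\inf_{s>0}{\rm Lip}_s(f)$, and $f$ is coarse Lipschitz if ${\rm Lip}_s(f)<\infty$ for some $s>0$. For $d>K$, $c_d$ is the infimum of all $c>0$ such that $f(B_S(x,cr))^K\supseteq B_Y(f(x),r)$ for all $x\in S$ and all $r\ge d$; $c_\infty(f):=\inf_{d>K}c_d=\lim_{d\to\infty}c_d$. *)

(* Defs.v *)
From mathcomp Require Import all_boot all_order all_algebra.
From mathcomp Require Import all_classical all_reals all_analysis.
Set Implicit Arguments. Unset Strict Implicit. Unset Printing Implicit Defensive.
Import Order.TTheory GRing.Theory Num.Theory.
Import numFieldNormedType.Exports.
Local Open Scope classical_set_scope.
Local Open Scope ring_scope.

Section Defs.
Variable R : realType.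

Definition lin_subspace (Y : normedModType R) (Z : set Y) : Prop :=
  Z 0 /\ forall (a : R) (x y : Y), Z x -> Z y -> Z (a *: x + y).

Definition fin_codim (Y : normedModType R) (Z : set Y) : Prop :=
  lin_subspace Z /\
  exists (n : nat) (e : 'I_n -> Y), forall y : Y,
    exists (z : Y) (c : 'I_n -> R), Z z /\ y = z + \sum_(i < n) c i *: e i.

Definition infinite_dim (X : normedModType R) : Prop :=
  forall (n : nat) (e : 'I_n -> X), exists x : X,
    forall c : 'I_n -> R, x <> \sum_(i < n) c i *: e i.

Definition unit_sphere (X : normedModType R) (Z : set X) : set X :=
  [set z | Z z /\ `|z| = 1].
Definition unit_ball (X : normedModType R) : set X := [set x | `|x| <= 1].

Definition cball_in (X : normedModType R) (Z : set X) (z : X) (r : R) : set X :=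
  [set x | Z x /\ `|x - z| <= r].

Definition fatten (Y : normedModType R) (A : set Y) (K : R) : set Y :=
  [set y | exists2 a, A a & `|y - a| <= K].

Definition rho_bar (Y : normedModType R) (t : R) : \bar R :=
  ereal_sup [set ereal_inf [set ereal_sup
      [set ((`|y + t *: z| - 1)%:E) | z in unit_sphere Z]
    | Z in [set Z : set Y | fin_codim Z]]
  | y in unit_sphere setT].

Definition sep (X : normedModType R) (u : nat -> X) : \bar R :=
  ereal_inf [set (`|u ij.1 - u ij.2|)%:E | ij in [set ij : nat * nat | ij.1 <> ij.2]].

Definition beta_bar (X : normedModType R) (t : R) : \bar R :=
  (1 - ereal_sup [set ereal_inf [set (`|xu.1 - xu.2 n| / 2)%:E | n in [set: nat]]
     | xu in [set xu : X * (nat -> X) |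
         @unit_ball X xu.1 /\ (forall n, @unit_ball X (xu.2 n)) /\ (t%:E <= sep xu.2)%E]])%E.

Section Maps.
Variables (X Y : normedModType R) (S : set X) (f : X -> Y).
(* f is only considered on S *)

Definition modulus_cont (t : R) : \bar R :=
  ereal_sup [set (`|f xy.1 - f xy.2|)%:E
    | xy in [set xy : X * X | S xy.1 /\ S xy.2 /\ `|xy.1 - xy.2| <= t]].

Definition coarsely_continuous : Prop :=
  forall t : R, 0 < t -> (modulus_cont t < +oo)%E.

Definition co_coarsely_continuous (K : R) : Prop :=
  forall d : R, K < d -> exists2 delta : R, 0 < delta &
    forall x, S x -> cball_in setT (f x) d `<=` fatten (f @` cball_in S x delta) K.

Definition coarse_quotient (K : R) : Prop :=
  coarsely_continuous /\ co_coarsely_continuous K.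

Definition Lip_s (s : R) : \bar R :=
  ereal_sup [set (`|f xy.1 - f xy.2| / `|xy.1 - xy.2|)%:E
    | xy in [set xy : X * X | S xy.1 /\ S xy.2 /\ s <= `|xy.1 - xy.2|]].

Definition Lip_inf : \bar R := ereal_inf [set Lip_s s | s in [set s : R | 0 < s]].

Definition coarse_Lipschitz : Prop := exists2 s : R, 0 < s & (Lip_s s < +oo)%E.

Definition c_good (K d c : R) : Prop :=
  0 < c /\ forall (x : X) (r : R), S x -> d <= r ->
      cball_in setT (f x) r `<=` fatten (f @` cball_in S x (c * r)) K.

Definition c_d (K d : R) : \bar R :=
  ereal_inf [set c%:E | c in [set c : R | c_good K d c]].

Definition c_inf (K : R) : \bar R := ereal_inf [set c_d K d | d in [set d : R | K < d]].
End Maps.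
End Defs.

(* Main.v *)
Require Import Defs.
From mathcomp Require Import all_boot all_order all_algebra.
From mathcomp Require Import all_classical all_reals all_analysis.
From mathcomp Require Import ring lra.
Import Order.TTheory GRing.Theory Num.Theory.
Import numFieldNormedType.Exports.
Local Open Scope classical_set_scope.
Local Open Scope ring_scope.
Set Implicit Arguments. Unset Strict Implicit.

Lemma sub_sub_same (V : zmodType) (a b c : V) : (a - b) - (a - c) = c - b.
Proof. by rewrite opprB addrC addrA subrK. Qed.
Lemma addsub4 (V : zmodType) (a b c d : V) : (a + b) - (c + d) = (a - c) + (b - d).
Proof. by rewrite opprD addrACA. Qed.

Lemma pair_aux (R : realFieldType) (e0 l mu e eta : R) : 0 < e0 ->
  `|l - mu| * e0 < e + eta -> l - e / e0 < mu + eta / e0.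
Proof.
move=> e00 h.
have h2 : (l - mu) * e0 < e + eta by apply: le_lt_trans h; apply: ler_wpM2r; [exact: ltW | exact: ler_norm].
have : l - mu < (e + eta) / e0 by rewrite ltr_pdivlMr.
rewrite mulrDl; lra.
Qed.

Lemma aux3 (V : zmodType) (a b c d : V) : a - c - b = (a - (d + b)) + (d - c).
Proof. by rewrite opprD !addrA [a - d - b + d]addrAC subrK addrAC. Qed.

Section Span.
Variables (R : realType) (Y : normedModType R).

Fixpoint spanS (s : seq Y) (x : Y) : Prop :=
  match s with
  | [::] => x = 0
  | v :: s' => exists (l : R) (g : Y), spanS s' g /\ x = l *: v + g
  end.

Lemma spanS0 s : spanS s 0.
Proof. elim: s => [//|v s IH] /=; exists 0, 0; split => //; by rewrite scale0r addr0. Qed.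

Lemma spanSD s x y : spanS s x -> spanS s y -> spanS s (x + y).
Proof.
elim: s x y => [|v s IH] x y /=; first by move=> -> ->; rewrite addr0.
move=> [l [g [sg ->]]] [l' [g' [sg' ->]]]; exists (l + l'), (g + g'); split; first exact: IH.
by rewrite scalerDl addrACA.
Qed.

Lemma spanSZ s a x : spanS s x -> spanS s (a *: x).
Proof.
elim: s x => [|v s IH] x /=; first by move=> ->; rewrite scaler0.
move=> [l [g [sg ->]]]; exists (a * l), (a *: g); split; first exact: IH.
by rewrite scalerDr scalerA.
Qed.

Lemma spanSN s x : spanS s x -> spanS s (- x).
Proof. by move=> h; rewrite -scaleN1r; apply: spanSZ. Qed.

Lemma spanS_cons s v x : spanS s x -> spanS (v :: s) x.
Proof. by move=> h; exists 0, x; rewrite scale0r add0r. Qed.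

Lemma spanS_head s v : spanS (v :: s) v.
Proof. by exists 1, 0; rewrite scale1r addr0; split => //; apply: spanS0. Qed.

Lemma spanS_mem s v : v \in s -> spanS s v.
Proof.
elim: s => [//|w s IH]; rewrite in_cons => /orP[/eqP ->|/IH]; first exact: spanS_head.
exact: spanS_cons.
Qed.

Lemma spanS_catl s t x : spanS s x -> spanS (s ++ t) x.
Proof.
elim: s x => [|v s IH] x /=; first by move=> ->; apply: spanS0.
by move=> [l [g [sg ->]]]; exists l, g; split => //; apply: IH.
Qed.

Lemma spanS_catr s t x : spanS t x -> spanS (s ++ t) x.
Proof. by elim: s => [//|v s IH] /= h; exists 0, x; rewrite scale0r add0r; split => //; apply: IH. Qed.

Lemma spanS_sub (Z : set Y) s x : lin_subspace Z -> (forall w, w \in s -> Z w) -> spanS s x -> Z x.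
Proof.
move=> [Z0 Zl]; elim: s x => [|v s IH] x /= hs; first by move=> ->.
move=> [l [g [sg ->]]]; apply: Zl; first by apply: hs; rewrite mem_head.
apply: IH => // w ws; apply: hs; by rewrite in_cons ws orbT.
Qed.

Lemma spanS_sum n (e : 'I_n -> Y) (c : 'I_n -> R) :
  spanS [seq e i | i <- enum 'I_n] (\sum_(i < n) c i *: e i).
Proof.
rewrite -big_enum /=. elim: (enum 'I_n) => [|i l IH]; first by rewrite big_nil.
by rewrite big_cons /=; exists (c i), (\sum_(j <- l) c j *: e j).
Qed.

Lemma spanS_coef s x : spanS s x -> exists c : nat -> R, x = \sum_(i < size s) c i *: s`_i.
Proof.
elim: s x => [|v s IH] x /=; first by move=> ->; exists (fun _ => 0); rewrite big_ord0.
move=> [l [g [/IH [c ->] ->]]].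
exists (fun n => if n is k.+1 then c k else l).
by rewrite big_ord_recl /=.
Qed.


Definition approxS (s : seq Y) (x : Y) : Prop :=
  forall e : R, 0 < e -> exists g, spanS s g /\ `|x - g| < e.

Lemma spanS_closed s x : approxS s x -> spanS s x.
Proof.
elim: s x => [|v s IH] x /=.
  move=> h; apply/eqP/negPn/negP => x0.
  have := h `|x| ; rewrite normr_gt0 => /(_ x0) [g [/= -> ]].
  by rewrite subr0 ltxx.
move=> hx.
case: (pselect (spanS s v)) => hv.
  suff : spanS s x by move=> sx; exists 0, x; rewrite scale0r add0r.
  apply: IH => e e0; have [g [[l [g' [sg' ->]]] hg]] := hx e e0.
  by exists (l *: v + g'); split => //; apply: spanSD => //; apply: spanSZ.
have [e0 [e00 he0]] : exists e0 : R, 0 < e0 /\ forall g, spanS s g -> e0 <= `|v - g|.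
  apply: contrapT => H; apply: hv; apply: IH => e e1.
  apply: contrapT => H2; apply: H; exists e; split => // g sg.
  rewrite leNgt; apply/negP => lt; apply: H2; by exists g.
have key : forall l g, spanS s g -> `|l| * e0 <= `|l *: v + g|.
  move=> l g sg; have [->|l0] := eqVneq l 0; first by rewrite normr0 mul0r.
  have -> : l *: v + g = l *: (v - (- l^-1 *: g)).
    by rewrite scaleNr opprK scalerDr scalerA divff // scale1r.
  rewrite normrZ ler_wpM2l //; apply: he0; exact: spanSZ.
pose A := [set z : R | exists e l g, 0 < e /\ spanS s g /\ `|x - (l *: v + g)| < e /\ z = l - e / e0].
have pair : forall e l g eta mu h, spanS s g -> spanS s h ->
    `|x - (l *: v + g)| < e -> `|x - (mu *: v + h)| < eta -> `|l - mu| * e0 < e + eta.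
  move=> e l g eta mu h sg sh h1 h2.
  have := key (l - mu) (g - h) (spanSD sg (spanSN sh)).
  move/le_lt_trans; apply.
  have -> : (l - mu) *: v + (g - h) = (x - (mu *: v + h)) - (x - (l *: v + g)).
    by rewrite sub_sub_same addsub4 scalerBl.
  rewrite (le_lt_trans (ler_normB _ _)) // addrC ltrD //.
have [l1 [g1 [sg1 h1]]] : exists l g, spanS s g /\ `|x - (l *: v + g)| < 1.
  by have [g [[l [g' [sg' ->]]] hg]] := hx 1 ltr01; exists l, g'.
have A0 : A (l1 - 1 / e0) by exists 1, l1, g1.
have hasA : has_sup A.
  split; first by exists (l1 - 1 / e0).
  exists (l1 + 1 / e0) => z [e [l [g [e1 [sg [hg ->]]]]]].
  exact/ltW/(pair_aux e00 (pair _ _ _ _ _ _ sg sg1 hg h1)).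
pose lam := sup A.
have lam_ge : forall e l g, 0 < e -> spanS s g -> `|x - (l *: v + g)| < e -> l - e / e0 <= lam.
  by move=> e l g e1 sg hg; apply: sup_upper_bound => //; exists e, l, g.
have lam_le : forall e l g, 0 < e -> spanS s g -> `|x - (l *: v + g)| < e -> lam <= l + e / e0.
  move=> e l g e1 sg hg; apply: ge_sup; first by exists (l1 - 1 / e0).
  move=> z [e' [l' [g' [e1' [sg' [hg' ->]]]]]].
  exact/ltW/(pair_aux e00 (pair _ _ _ _ _ _ sg' sg hg' hg)).
have : spanS s (x - lam *: v).
  apply: IH => e' e'0.
  pose e := e' * e0 / (2 * (e0 + `|v|)).
  have vp : 0 < e0 + `|v| by rewrite ltr_wpDr.
  have e1 : 0 < e by rewrite /e divr_gt0 // ?mulr_gt0 //.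
  have [g [[l [g' [sg' ->]]] hg]] := hx e e1.
  exists g'; split => //.
  have -> : x - lam *: v - g' = (x - (l *: v + g')) + (l - lam) *: v.
    by rewrite scalerBl (aux3 _ _ _ (l *: v)).
  apply: (le_lt_trans (ler_normD _ _)); rewrite normrZ.
  have hl : `|l - lam| <= e / e0.
    have := lam_ge _ _ _ e1 sg' hg; have := lam_le _ _ _ e1 sg' hg.
    rewrite ler_norml; move=> a b; apply/andP; split; lra.
  have : e + e / e0 * `|v| = e' / 2.
    rewrite /e; field; apply/andP; split; [exact: lt0r_neq0|exact: lt0r_neq0].
  move=> E; apply: (lt_le_trans (ltr_leD hg (ler_wpM2r (normr_ge0 v) hl))).
  rewrite E; lra.
move=> H; exists lam, (x - lam *: v); split => //.
by rewrite addrC subrK.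
Qed.

Lemma spanS_all (s : seq Y) : infinite_dim Y -> (forall y, spanS s y) -> False.
Proof.
move=> hY hs; have [x hx] := hY (size s) (fun i => s`_i).
have [c hc] := spanS_coef (hs x).
by apply: (hx (fun i => c (val i))).
Qed.

Lemma linZ_sub (Z : set Y) x y : lin_subspace Z -> Z x -> Z y -> Z (x - y).
Proof.
move=> [Z0 Zl] zx zy; rewrite addrC -scaleN1r; exact: Zl.
Qed.

Lemma linZ_scale (Z : set Y) a x : lin_subspace Z -> Z x -> Z (a *: x).
Proof. by move=> [Z0 Zl] zx; rewrite -[a *: x]addr0; apply: Zl. Qed.

Lemma greedy (Z : set Y) (s : seq Y) : infinite_dim Y -> fin_codim Z ->
  (forall w, w \in s -> Z w) ->
  exists z, Z z /\ `|z| = 1 /\ forall w, w \in s -> 1 / 2 <= `|z - w|.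
Proof.
move=> hY [lZ [n [e he]]] hs.
apply: contrapT => H.
have cover : forall z, Z z -> `|z| = 1 -> exists2 w, w \in s & `|z - w| < 1 / 2.
  move=> z zz z1; apply: contrapT => H2; apply: H; exists z; split => //; split => // w ws.
  rewrite leNgt; apply/negP => lt; apply: H2; by exists w.
have step : forall w, Z w -> exists g, spanS s g /\ 2 * `|w - g| <= `|w|.
  move=> w zw; have [->|w0] := eqVneq w 0.
    by exists 0; split; [exact: spanS0|rewrite subr0 normr0 mulr0].
  have nw : 0 < `|w| by rewrite normr_gt0.
  have hz1 : `| `|w|^-1 *: w| = 1 by rewrite normrZ normfV normr_id mulVf // lt0r_neq0.
  have [w' w's hw'] := cover (`|w|^-1 *: w) (linZ_scale _ lZ zw) hz1.
  exists (`|w| *: w'); split; first by apply: spanSZ; exact: spanS_mem.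
  have -> : w - `|w| *: w' = `|w| *: (`|w|^-1 *: w - w').
    by rewrite scalerBr scalerA divff ?scale1r // lt0r_neq0.
  rewrite normrZ normr_id mulrCA -[X in _ <= X]mulr1.
  apply: ler_wpM2l; [exact: ltW | lra].
have iter : forall m w, Z w -> exists g, spanS s g /\ (2 ^ m)%:R * `|w - g| <= `|w|.
  elim=> [|m IH] w zw.
    by exists 0; split; [exact: spanS0|rewrite expn0 mul1r subr0].
  have [g [sg hg]] := IH w zw.
  have ze : Z (w - g) by apply: linZ_sub => //; exact: (spanS_sub lZ hs sg).
  have [g' [sg' hg']] := step _ ze.
  exists (g + g'); split; first exact: spanSD.
  rewrite opprD addrA expnSr natrM -mulrA.
  apply: le_trans hg; apply: ler_wpM2l => //; rewrite ler0n //.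
pose E := [seq e i | i <- enum 'I_n].
apply: (spanS_all (s := s ++ E)) => // y.
apply: spanS_closed => eps eps0.
have [w [c [zw ->]]] := he y.
pose m := (Num.Def.trunc (`|w| / eps)).+1.
have [g [sg hg]] := iter m w zw.
exists (g + \sum_(i < n) c i *: e i); split.
  by apply: spanSD; [apply: spanS_catl | apply: spanS_catr; apply: spanS_sum].
rewrite addsub4 subrr addr0.
have h1 : `|w| / eps < m%:R by apply: truncnS_gt.
have h2 : (m%:R : R) <= (2 ^ m)%:R by rewrite ler_nat ltnW // ltn_expl.
have h3 : `|w| < (2 ^ m)%:R * eps.
  by rewrite -ltr_pdivrMr //; apply: lt_le_trans h2.
have h4 : (0 : R) < (2 ^ m)%:R by rewrite ltr0n expn_gt0.
rewrite -(ltr_pM2l h4); exact: le_lt_trans h3.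
Qed.


Lemma sep_seq (Z : set Y) : infinite_dim Y -> fin_codim Z ->
  exists z : nat -> Y, (forall n, Z (z n) /\ `|z n| = 1) /\
    forall i j, i <> j -> 1 / 2 <= `|z i - z j|.
Proof.
move=> hY hZ.
have H : forall s : seq Y, exists z, (forall w, w \in s -> Z w) ->
    Z z /\ `|z| = 1 /\ forall w, w \in s -> 1 / 2 <= `|z - w|.
  move=> s; case: (pselect (forall w, w \in s -> Z w)) => hs.
    have [z hz] := greedy hY hZ hs; by exists z.
  by exists 0.
have [nx hnx] := choice H.
pose pre := fix pre k := if k is k'.+1 then rcons (pre k') (nx (pre k')) else [::].
have P : forall k, (forall w, w \in pre k -> Z w) /\ (forall i, (i < k)%N -> nx (pre i) \in pre k).
  elim=> [|k [IH1 IH2]] /=; first by split.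
  have [zk _] := hnx _ IH1.
  split.
    by move=> w; rewrite mem_rcons in_cons => /orP[/eqP ->|/IH1].
  move=> i; rewrite ltnS leq_eqVlt => /orP[/eqP ->|/IH2 h]; rewrite mem_rcons in_cons ?eqxx //.
  by rewrite h orbT.
exists (fun k => nx (pre k)); split.
  by move=> k; have [h _] := P k; have [? [? _]] := hnx _ h.
have key : forall i j, (i < j)%N -> 1 / 2 <= `|nx (pre j) - nx (pre i)|.
  move=> i j ij; have [h1 h2] := P j; have [_ [_ h]] := hnx _ h1; exact/h/h2.
move=> i j /eqP; rewrite neq_ltn => /orP[ij|ji]; last exact: key.
by rewrite distrC; apply: key.
Qed.


Lemma fin_codimT : fin_codim (@setT Y).
Proof.
split; first by split.
by exists 0%N, (fun _ => 0) => y; exists y, (fun _ => 0); split => //; rewrite big_ord0 addr0.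
Qed.

Lemma unit_vec : infinite_dim Y -> exists y : Y, `|y| = 1.
Proof.
move=> hY; have [y [_ [y1 _]]] := @greedy setT [::] hY fin_codimT (fun w (h : w \in [::]) => I).
by exists y.
Qed.


Lemma rho_ge0 (t : R) : infinite_dim Y -> (0 <= rho_bar Y t)%E.
Proof.
move=> hY; have [y y1] := unit_vec hY.
apply: le_ereal_sup_tmp; eexists; first by exists y.
apply: le_ereal_inf_tmp => _ [Z hZ <-].
have [z [zZ [z1 _]]] := @greedy Z [::] hY hZ (fun w (h : w \in [::]) => False_ind _ (notF h)).
have hsum : 2 <= `|y + t *: z| + `|y + t *: (- z)|.
  have := ler_normD (y + t *: z) (y + t *: (- z)).
  rewrite scalerN addrACA subrr addr0 -[y + y]mulr2n -scaler_nat normrZ y1 mulr1.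
  by rewrite normr_nat.
have [h|h] : 1 <= `|y + t *: z| \/ 1 <= `|y + t *: (- z)|.
  by case: (lerP 1 `|y + t *: z|) => h; [left|right; lra].
- apply: le_ereal_sup_tmp; exists (`|y + t *: z| - 1)%:E; first by exists z.
  by rewrite lee_fin subr_ge0.
- apply: le_ereal_sup_tmp; exists (`|y + t *: (- z)| - 1)%:E.
    exists (- z) => //; split; last by rewrite normrN.
    by rewrite -scaleN1r; apply: linZ_scale => //; case: hZ.
  by rewrite lee_fin subr_ge0.
Qed.

Lemma rho_le (t : R) : 0 <= t -> (rho_bar Y t <= t%:E)%E.
Proof.
move=> t0; apply: ge_ereal_sup => _ [y [_ y1] <-].
apply: ge_ereal_inf; exists (ereal_sup [set ((`|y + t *: z| - 1)%:E) | z in unit_sphere setT]).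
  by exists setT => //; exact: fin_codimT.
apply: ge_ereal_sup => _ [z [_ z1] <-].
rewrite lee_fin lerBlDl; apply: le_trans (ler_normD _ _) _.
by rewrite normrZ y1 z1 mulr1 ger0_norm.
Qed.

End Span.

Lemma idA (V : zmodType) (u A B : V) : (u + (A + A + A + A)) - (u + A + (A + B)) = (A - B) + A.
Proof. by rewrite -[u + A + _]addrA addsub4 subrr add0r opprD addrA addrK opprD addrA addrK addrAC. Qed.
Lemma idB (V : zmodType) (q P : V) : (q + P) - q = P.
Proof. by rewrite addrAC subrr add0r. Qed.

Lemma sub_sub_r (V : zmodType) (a b c : V) : (a - c) - (b - c) = a - b.
Proof. by rewrite addsub4 subrr addr0. Qed.

Lemma fin_arith (R : realFieldType) (a r rho Bh g K r1 r2 : R) :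
  r1 = a / 2 * (1 + rho) + K -> r2 = a / 2 * (1 + rho) + a / 2 + K ->
  0 <= a -> a <= r / 2 -> 0 <= rho -> 0 < g -> g <= 1 -> Bh + 3 / 2 * rho <= 1 - g ->
  0 <= K -> 12 * K <= g * r -> r2 + 2 * Bh * r1 <= (1 - g / 4) * r.
Proof.
move=> -> -> a0 ar rho0 g0 g1 hB K0 hK.
have f1 : Bh * (a * rho) <= a * rho.
  have : 0 <= (1 - Bh) * (a * rho) by apply: mulr_ge0; [lra | exact: mulr_ge0].
  lra.
have f2 : a * (2 - g) <= (r / 2) * (2 - g) by apply: ler_wpM2r; lra.
have f3 : Bh * K <= K.
  have : 0 <= (1 - Bh) * K by apply: mulr_ge0; lra.
  lra.
have f4 : Bh * a <= (1 - g - 3 / 2 * rho) * a by apply: ler_wpM2r; lra.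
lra.
Qed.

Section Improve.
Variables (R : realType) (X Y : normedModType R) (S : set X) (f : X -> Y).

Lemma improve (K L c c1 d W t rho Bh g : R) :
  infinite_dim Y -> 0 <= K ->
  (forall x1 x2, S x1 -> S x2 -> W < `|f x1 - f x2| -> `|f x1 - f x2| <= 2 * L * `|x1 - x2|) ->
  (forall x r p, S x -> d <= r -> `|p - f x| <= r ->
     exists x', S x' /\ `|x' - x| <= c1 * r /\ `|p - f x'| <= K) ->
  (forall (x : X) (xs : nat -> X), `|x| <= 1 -> (forall n, `|xs n| <= 1) ->
     (forall i j, i <> j -> t / (48 * L * c) <= `|xs i - xs j|) ->
     exists n, `|x - xs n| < 2 * Bh) ->
  (forall y : Y, `|y| = 1 -> exists Z, fin_codim Z /\
     forall z, Z z -> `|z| = 1 -> `|y + t *: z| <= 1 + rho) ->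
  0 < L -> 0 < c -> c <= c1 -> c1 <= 2 * c -> 0 < t -> t <= 1 ->
  0 <= rho -> rho <= 2 -> 0 <= d -> 0 < g -> g <= 1 -> Bh + 3 / 2 * rho <= 1 - g ->
  forall x r v, S x -> 8 * d <= r -> 16 * (W + 2 * K + 1) <= t * r -> 128 * K <= t * r ->
    12 * K <= g * r -> `|v - f x| <= r ->
    exists w, S w /\ `|w - x| <= c1 * (1 - g / 4) * r /\ `|v - f w| <= K.
Proof.
move=> hY K0 Psep Plift HB Hrho L0 c0 cc1 c12 t0 t1 rho0 rho2 d0 g0 g1 hBh.
move=> x r v Sx r8 rW rK rg hv.
have r0 : 0 <= r by lra.
have c10 : 0 < c1 by lra.
have [r0' er0] : exists r0', `|v - f x| = r0' by eexists.
rewrite er0 in hv.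
case: (lerP r0' (r / 2)) => hr0.
  have hd : d <= r / 2 by lra.
  have hr0' : `|v - f x| <= r / 2 by rewrite er0.
  have [w [Sw [hw1 hw2]]] := Plift x (r / 2) v Sx hd hr0'.
  exists w; split => //; split => //; apply: le_trans hw1 _.
  rewrite -mulrA ler_wpM2l //; first lra. nra.
have r0p : 0 < r0' by lra.
set u := f x.
pose y := r0'^-1 *: (v - u).
have y1 : `|y| = 1 by rewrite normrZ normfV (ger0_norm (ltW r0p)) /u er0 mulVf // lt0r_neq0.
have [a ea] : exists a, a = r0' / 2 by eexists.
have ha1 : r / 4 <= a by rewrite ea; lra.
have ha2 : a <= r / 2 by rewrite ea; lra.
pose A := (a / 2) *: y.
have hv2 : v = u + (A + A + A + A).
  have e4 : r0' = a / 2 + a / 2 + a / 2 + a / 2 by rewrite ea; lra.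
  have : r0' *: y = v - u by rewrite /y scalerA mulfV ?lt0r_neq0 // scale1r.
  rewrite {1}e4 !scalerDl -/A => ->.
  by rewrite addrC subrK.
have [Z [hZ hZr]] := Hrho y y1.
have lZ := hZ.1.
have [zs [hzs hsep]] := sep_seq hY hZ.
pose q := u + A.
pose P := fun n => (a / 2) *: (y + t *: zs n).
pose p := fun n => q + P n.
have a0 : 0 <= a by lra.
have hA : `|A| = a / 2 by rewrite /A normrZ y1 mulr1 ger0_norm //; lra.
have hP : forall n, `|P n| <= a / 2 * (1 + rho).
  move=> n; rewrite /P normrZ ger0_norm; last lra.
  by apply: ler_wpM2l; [lra | apply: hZr; case: (hzs n)].
have hd2 : d <= a / 2 by lra.
have hq : `|q - f x| <= a / 2 by rewrite /q idB hA.
have [m [Sm [hm1 hm2]]] := Plift x (a / 2) q Sx hd2 hq.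
have [r1 er1] : exists r1, r1 = a / 2 * (1 + rho) + K by eexists.
have hd3 : d <= r1 by rewrite er1; nra.
have hp : forall n, `|p n - f m| <= r1.
  move=> n; have -> : p n - f m = P n + (q - f m) by rewrite /p addrAC addrC.
  apply: le_trans (ler_normD _ _) _; rewrite er1; apply: lerD; first exact: hP.
  exact: hm2.
have [xs hxs] := choice (fun n => Plift m r1 (p n) Sm hd3 (hp n)).
have rpos : 0 < r by lra.
have apos : 0 < a by lra.
have r1pos : 0 < r1 by rewrite er1; nra.
have [Rr eRr] : exists Rr, Rr = c1 * r1 by eexists.
have Rr0 : 0 < Rr by rewrite eRr mulr_gt0.
have hpp : forall i j, i <> j -> a * t / 4 <= `|p i - p j|.
  move=> i j ij.
  have -> : p i - p j = (a / 2 * t) *: (zs i - zs j).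
    rewrite /p addsub4 subrr add0r /P -scalerBr addsub4 subrr add0r -scalerBr scalerA //.
  rewrite normrZ ger0_norm; last by apply: mulr_ge0; [lra|exact: ltW].
  move: (hsep i j ij) => hN; have at0 : 0 <= a * t by apply: mulr_ge0; lra.
  nra.
have hat : t * r / 4 <= a * t by nra.
have hsepx : forall i j, i <> j -> t / (48 * L * c) * Rr <= `|xs i - xs j|.
  move=> i j ij.
  have [Si [_ hi]] := hxs i; have [Sj [_ hj]] := hxs j.
  have h1 := hpp i j ij.
  have h2 : `|p i - p j| <= `|p i - f (xs i)| + `|f (xs i) - f (xs j)| + `|f (xs j) - p j|.
    apply: le_trans (ler_distD (f (xs j)) _ _) _; apply: lerD => //; exact: ler_distD.
  have h3 : `|f (xs j) - p j| <= K by rewrite distrC.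
  have hW : W < `|f (xs i) - f (xs j)| by lra.
  have h4 := Psep _ _ Si Sj hW.
  have e1 : t / (48 * L * c) * Rr * (2 * L) = c1 / c * (t * r1 / 24).
    rewrite eRr; field; apply/andP; split; exact: lt0r_neq0.
  have h5 : c1 / c <= 2 by rewrite ler_pdivrMr.
  have h6 : 0 <= t * r1 / 24 by apply: divr_ge0 => //; apply: mulr_ge0; lra.
  have h7 : t / (48 * L * c) * Rr * (2 * L) <= 2 * (t * r1 / 24).
    by rewrite e1; apply: ler_wpM2r.
  have h8 : t * r1 <= t * (3 / 2 * a + K) by apply: ler_wpM2l; [lra | rewrite er1; nra].
  have h9 : t / (48 * L * c) * Rr * (2 * L) <= 2 * L * `|xs i - xs j|.
    apply: le_trans h7 _; apply: le_trans _ h4; nra.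
  nra.
have nle1 : forall w : X, `|w| <= Rr -> `|Rr^-1 *: w| <= 1.
  move=> w hw; rewrite normrZ ger0_norm; last by rewrite invr_ge0 ltW.
  by rewrite mulrC ler_pdivrMr // mul1r.
have hxm : `|x - m| <= Rr.
  by rewrite distrC eRr; apply: le_trans hm1 _; apply: (ler_wpM2l (ltW c10)); rewrite er1; nra.
have hxs1 : forall n, `|Rr^-1 *: (xs n - m)| <= 1.
  by move=> n; apply: nle1; have [_ [h _]] := hxs n; rewrite eRr.
have hxs2 : forall i j, i <> j -> t / (48 * L * c) <= `|Rr^-1 *: (xs i - m) - Rr^-1 *: (xs j - m)|.
  move=> i j ij; rewrite -scalerBr sub_sub_r normrZ ger0_norm; last by rewrite invr_ge0 ltW.
  by rewrite [Rr^-1 * _]mulrC ler_pdivlMr //; apply: hsepx.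
have [n hn] := HB (Rr^-1 *: (x - m)) (fun n => Rr^-1 *: (xs n - m)) (nle1 _ hxm) hxs1 hxs2.
rewrite -scalerBr sub_sub_r normrZ ger0_norm in hn; last by rewrite invr_ge0 ltW.
rewrite [Rr^-1 * _]mulrC ltr_pdivrMr // in hn.
have [Sn [hn1 hn2]] := hxs n.
pose B := (a / 2) *: (t *: zs n).
have hPn : P n = A + B by rewrite /P scalerDr.
have hvp : v - p n = (A - B) + A by rewrite hv2 /p /q hPn idA.
have hAB : A - B = (a / 2) *: (y + t *: (- zs n)) by rewrite /A /B scalerDr !scalerN.
have hAB' : `|A - B| <= a / 2 * (1 + rho).
  rewrite hAB normrZ ger0_norm; last lra.
  apply: ler_wpM2l; first lra.
  have [zn zn1] := hzs n.
  apply: hZr; last by rewrite normrN.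
  by rewrite -scaleN1r; apply: linZ_scale.
have [r2 er2] : exists r2, r2 = a / 2 * (1 + rho) + a / 2 + K by eexists.
have hvx : `|v - f (xs n)| <= r2.
  apply: le_trans (ler_distD (p n) _ _) _; rewrite hvp er2; apply: lerD => //.
  by apply: le_trans (ler_normD _ _) _; rewrite hA; apply: lerD.
have hd4 : d <= r2 by rewrite er2; have := mulr_ge0 (ltW apos) rho0; lra.
have [w [Sw [hw1 hw2]]] := Plift (xs n) r2 v Sn hd4 hvx.
exists w; split => //; split => //.
have hwx : `|w - x| <= c1 * r2 + 2 * Bh * Rr.
  apply: le_trans (ler_distD (xs n) _ _) _; apply: lerD => //.
  by rewrite distrC; apply: ltW.
apply: le_trans hwx _.
have fin := fin_arith er1 er2 (ltW apos) ha2 rho0 g0 g1 hBh K0 rg.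
rewrite eRr.
have -> : c1 * r2 + 2 * Bh * (c1 * r1) = c1 * (r2 + 2 * Bh * r1) by ring.
rewrite -[c1 * (1 - g / 4) * r]mulrA; exact: (ler_wpM2l (ltW c10) fin).
Qed.
End Improve.

Section Misc.
Variable R : realType.

Definition Bsup (X : normedModType R) (t : R) : \bar R :=
  ereal_sup [set ereal_inf [set (`|xu.1 - xu.2 n| / 2)%:E | n in [set: nat]]
     | xu in [set xu : X * (nat -> X) |
         @unit_ball R X xu.1 /\ (forall n, @unit_ball R X (xu.2 n)) /\ (t%:E <= sep xu.2)%E]].

Lemma betaE (X : normedModType R) t : beta_bar X t = (1 - Bsup X t)%E.
Proof. by []. Qed.

Lemma beta_le0 (X : normedModType R) s : infinite_dim X -> s <= 0 -> (beta_bar X s <= 0)%E.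
Proof.
move=> hX s0; have [e e1] := unit_vec hX.
rewrite betaE sube_le0.
apply: le_ereal_sup_tmp.
exists (ereal_inf [set (`|e - (- e)| / 2)%:E | n in [set: nat]]).
  exists (e, fun _ => - e) => //=; split; first by rewrite /unit_ball /= e1.
  split; first by move=> n; rewrite /unit_ball /= normrN e1.
  apply: le_ereal_inf_tmp => _ [ij _ <-]; by rewrite /= subrr normr0 lee_fin.
apply: le_ereal_inf_tmp => _ [n _ <-].
by rewrite lee_fin opprK -mulr2n normrMn e1 divff.
Qed.

Lemma HB_of (X : normedModType R) s Bh : (Bsup X s < Bh%:E)%E ->
  forall (x : X) (xs : nat -> X), `|x| <= 1 -> (forall n, `|xs n| <= 1) ->
     (forall i j, i <> j -> s <= `|xs i - xs j|) ->
     exists n, `|x - xs n| < 2 * Bh.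
Proof.
move=> hB x xs x1 xs1 hs.
have : (ereal_inf [set (`|x - xs n| / 2)%:E | n in [set: nat]] <= Bsup X s)%E.
  apply: ereal_sup_ubound; exists (x, xs) => //; split => //; split => //.
  apply: le_ereal_inf_tmp => _ [[i j] /= ij <-]; rewrite lee_fin; exact: hs.
move=> /le_lt_trans /(_ hB) /ereal_inf_lt [_ [n _ <-]].
rewrite lte_fin => h; exists n; lra.
Qed.

Lemma rho_real (Y : normedModType R) t : infinite_dim Y -> 0 <= t ->
  exists rr, rho_bar Y t = rr%:E /\ 0 <= rr /\ rr <= t.
Proof.
move=> hY t0; have h1 := rho_ge0 t hY; have h2 := rho_le Y t0.
move: h1 h2; case: (rho_bar Y t) => [r| |] //= h1 h2.
by exists r; rewrite -!lee_fin.
Qed.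

Lemma Hrho_of (Y : normedModType R) t rho : (rho_bar Y t < rho%:E)%E ->
  forall y : Y, `|y| = 1 -> exists Z, fin_codim Z /\
     forall z, Z z -> `|z| = 1 -> `|y + t *: z| <= 1 + rho.
Proof.
move=> h y y1.
have : (ereal_inf [set ereal_sup [set ((`|y + t *: z| - 1)%:E) | z in unit_sphere Z]
    | Z in [set Z : set Y | fin_codim Z]] <= rho_bar Y t)%E.
  by apply: ereal_sup_ubound; exists y.
move=> /le_lt_trans /(_ h) /ereal_inf_lt [_ [Z hZ <-]] hZ2.
exists Z; split => // z zZ z1.
have : ((`|y + t *: z| - 1)%:E <= ereal_sup [set ((`|y + t *: z| - 1)%:E) | z in unit_sphere Z])%E.
  by apply: ereal_sup_ubound; exists z.
move=> /le_lt_trans /(_ hZ2); rewrite lte_fin; lra.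
Qed.

End Misc.

Section Final.
Variables (R : realType) (X Y : normedModType R) (S : set X) (f : X -> Y).

Lemma lip_of L : 0 < L -> Lip_inf S f = L%:E -> exists s0, 0 < s0 /\
  forall x1 x2, S x1 -> S x2 -> s0 <= `|x1 - x2| -> `|f x1 - f x2| <= 2 * L * `|x1 - x2|.
Proof.
move=> L0 hL.
have : (Lip_inf S f < (2 * L)%:E)%E by rewrite hL lte_fin; lra.
case/ereal_inf_lt => _ [s0 s00 <-] hs0; exists s0; split => // x1 x2 S1 S2 hd.
have {}s00 : 0 < s0 := s00.
have : ((`|f x1 - f x2| / `|x1 - x2|)%:E <= Lip_s S f s0)%E.
  by apply: ereal_sup_ubound; exists (x1, x2).
have dpos : 0 < `|x1 - x2| by apply: lt_le_trans hd.
by move=> /le_lt_trans /(_ hs0); rewrite lte_fin ltr_pdivrMr // mulrC => /ltW.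
Qed.

Lemma W_of s0 : coarsely_continuous S f -> 0 < s0 -> exists W, forall x1 x2, S x1 -> S x2 ->
  `|x1 - x2| <= s0 -> `|f x1 - f x2| <= W.
Proof.
move=> cc s00; have := cc s0 s00.
case E: (modulus_cont S f s0) => [w| |] // _.
  exists w => x1 x2 S1 S2 h.
  have : ((`|f x1 - f x2|)%:E <= modulus_cont S f s0)%E.
    by apply: ereal_sup_ubound; exists (x1, x2).
  by rewrite E lee_fin.
exists 0 => x1 x2 S1 S2 h.
have : ((`|f x1 - f x2|)%:E <= modulus_cont S f s0)%E.
  by apply: ereal_sup_ubound; exists (x1, x2).
by rewrite E.
Qed.

Lemma c_inf_ge0 K c : c_inf S f K = c%:E -> 0 <= c.
Proof.
move=> hc; have : (0 <= c_inf S f K)%E.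
  apply: le_ereal_inf_tmp => _ [d _ <-]; apply: le_ereal_inf_tmp => _ [c' [c'0 _] <-].
  by rewrite lee_fin ltW.
by rewrite hc lee_fin.
Qed.

Lemma final K L c t rho Bh g :
  infinite_dim Y -> 0 <= K -> coarsely_continuous S f ->
  Lip_inf S f = L%:E -> c_inf S f K = c%:E -> 0 < L -> 0 < c -> 0 < t -> t <= 1 ->
  0 <= rho -> rho <= 2 -> 0 < g -> g <= 1 -> Bh + 3 / 2 * rho <= 1 - g ->
  (forall (x : X) (xs : nat -> X), `|x| <= 1 -> (forall n, `|xs n| <= 1) ->
     (forall i j, i <> j -> t / (48 * L * c) <= `|xs i - xs j|) ->
     exists n, `|x - xs n| < 2 * Bh) ->
  (forall y : Y, `|y| = 1 -> exists Z, fin_codim Z /\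
     forall z, Z z -> `|z| = 1 -> `|y + t *: z| <= 1 + rho) ->
  False.
Proof.
move=> hY K0 cc hL hc L0 c0 t0 t1 rho0 rho2 g0 g1 hBh HB Hrho.
have [s0 [s00 Plip]] := lip_of L0 hL.
have [W hW] := W_of cc s00.
have Psep : forall x1 x2, S x1 -> S x2 -> W < `|f x1 - f x2| -> `|f x1 - f x2| <= 2 * L * `|x1 - x2|.
  move=> x1 x2 S1 S2 hw; apply: Plip => //; rewrite leNgt; apply/negP => h.
  by have := hW _ _ S1 S2 (ltW h); rewrite leNgt hw.
have : (c_inf S f K < (c * (1 + g / 8))%:E)%E by rewrite hc lte_fin; nra.
case/ereal_inf_lt => _ [d Kd <-] /ereal_inf_lt [_ [c1 hc1 <-]]; rewrite lte_fin => c1lt.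
have {}Kd : K < d := Kd.
have cc1 : c <= c1.
  have : (c_inf S f K <= c_d S f K d)%E by apply: ereal_inf_lbound; exists d.
  have : (c_d S f K d <= c1%:E)%E by apply: ereal_inf_lbound; exists c1.
  by rewrite hc => h1 h2; have := le_trans h2 h1; rewrite lee_fin.
have c12 : c1 <= 2 * c by nra.
have [c10 hgood] := hc1.
have Plift : forall x r p, S x -> d <= r -> `|p - f x| <= r ->
     exists x', S x' /\ `|x' - x| <= c1 * r /\ `|p - f x'| <= K.
  move=> x r p Sx dr hp.
  have [_ [x' [Sx' hx'] <-] hK] := hgood x r Sx dr p (conj I hp).
  by exists x'.
have d0 : 0 <= d by lra.
have imp := improve hY K0 Psep Plift HB Hrho L0 c0 cc1 c12 t0 t1 rho0 rho2 d0 g0 g1 hBh.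
pose D := 8 * d + 16 * `|W + 2 * K + 1| / t + 128 * K / t + 12 * K / g + K + 1.
have hD1 : 0 <= 16 * `|W + 2 * K + 1| / t by apply: divr_ge0; [apply: mulr_ge0 | lra].
have hD2 : 0 <= 128 * K / t by apply: divr_ge0; [apply: mulr_ge0 | ]; lra.
have hD3 : 0 <= 12 * K / g by apply: divr_ge0; [apply: mulr_ge0 | ]; lra.
have good : c_good S f K D (c1 * (1 - g / 4)).
  split; first by apply: mulr_gt0 => //; lra.
  move=> x r Sx Dr p [_ hp].
  have r1 : 8 * d <= r by rewrite /D in Dr; lra.
  have r2 : 16 * (W + 2 * K + 1) <= t * r.
    have : 16 * `|W + 2 * K + 1| / t <= r by rewrite /D in Dr; lra.
    rewrite ler_pdivrMr // => h; rewrite [t * r]mulrC; apply: le_trans _ h.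
    apply: ler_wpM2l; [lra | exact: ler_norm].
  have r3 : 128 * K <= t * r.
    have : 128 * K / t <= r by rewrite /D in Dr; lra.
    by rewrite ler_pdivrMr // [r * t]mulrC.
  have r4 : 12 * K <= g * r.
    have : 12 * K / g <= r by rewrite /D in Dr; lra.
    by rewrite ler_pdivrMr // [r * g]mulrC.
  have [w [Sw [hw1 hw2]]] := imp x r p Sx r1 r2 r3 r4 hp.
  exists (f w) => //; exists w => //; split => //; by rewrite mulrA.
have KD : K < D by rewrite /D; lra.
have : (c_inf S f K <= c_d S f K D)%E by apply: ereal_inf_lbound; exists D.
have : (c_d S f K D <= (c1 * (1 - g / 4))%:E)%E by apply: ereal_inf_lbound; exists (c1 * (1 - g / 4)).
rewrite hc => h1 h2; have := le_trans h2 h1; rewrite lee_fin => h.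
have : c1 * (1 - g / 4) < c by nra.
lra.
Qed.

End Final.

Unset Implicit Arguments. Set Strict Implicit.

Theorem theorem3p2 (R : realType) (X Y : completeNormedModType R)
  (S : set X) (K : R) (f : X -> Y) :
  infinite_dim X -> infinite_dim Y -> 0 <= K ->
  coarse_quotient S f K -> coarse_Lipschitz S f ->
  forall L c : R, Lip_inf S f = L%:E -> c_inf S f K = c%:E ->
  forall t : R, 0 < t -> t <= 1 ->
  (beta_bar X (t / (48 * L * c)) <= (3 / 2)%:E * rho_bar Y t)%E.
Proof.
move=> hX hY K0 [cc hco] _ L c hL hc t t0 t1.
have [rr [er [rr0 rrt]]] := rho_real hY (ltW t0).
rewrite er -EFinM.
case: (lerP (t / (48 * L * c)) 0) => hs.
  apply: le_trans (beta_le0 hX hs) _; rewrite lee_fin; apply: mulr_ge0 => //; lra.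
have c0 := c_inf_ge0 hc.
have Lc : 0 < 48 * L * c by move: hs; rewrite (pmulr_rgt0 _ t0) invr_gt0.
have cpos : 0 < c.
  rewrite lt_neqAle c0 andbT eq_sym; apply/eqP => c00.
  by move: Lc; rewrite c00 mulr0 ltxx.
have Lpos : 0 < L.
  have h48 : (0 : R) < 48 by [].
  by move: Lc; rewrite -mulrA (pmulr_rgt0 _ h48) (pmulr_lgt0 _ cpos).
rewrite betaE.
apply: contrapT => hneg.
have [rho [Bh [g [h1 [h2 [h3 [h4 [h5 [h6 hB]]]]]]]]] : exists rho Bh g, 0 <= rho /\ rr < rho /\
    rho <= 2 /\ 0 < g /\ g <= 1 /\ Bh + 3 / 2 * rho <= 1 - g /\
    (Bsup X (t / (48 * L * c)) < Bh%:E)%E.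
  move: hneg; case: (Bsup X _) => [b| |] hneg.
  - have G : 3 / 2 * rr < 1 - b.
      by rewrite ltNge; apply/negP => h; apply: hneg; rewrite -EFinB lee_fin.
    have [e [e0 [e1 e2]]] : exists e : R, 0 < e /\ e <= 1 / 6 /\ 6 * e <= 1 - b - 3 / 2 * rr.
      case: (lerP (1 - b - 3 / 2 * rr) 1) => hG.
        by exists ((1 - b - 3 / 2 * rr) / 6); split; [|split]; lra.
      by exists (1 / 6); split; [|split]; lra.
    exists (rr + e), (b + e), e; do 6!(split; first lra).
    by rewrite lte_fin; lra.
  - by exfalso; apply: hneg; rewrite addeNy leNye.
  - exists (rr + 1 / 6), (- (3 / 2) * rr - 1), 1; do 6!(split; first lra).
    exact: ltNyr.
have Hr : (rho_bar Y t < rho%:E)%E by rewrite er lte_fin.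
exact: (final hY K0 cc hL hc Lpos cpos t0 t1 h1 h3 h4 h5 h6 (HB_of hB) (Hrho_of Hr)).
Qed.
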